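(* Let ${}^*$ be a nonstandard analysis, $A,B$ sets and $R\subseteq A\times B$. Let $a^*\in{}^*A$, $b^*\in{}^*B$, and let $S=\{b\in B:(a^*,\nu_B(b))\in{}^*R\}\subseteq B$. Then $$\big(\nu_{{}^*A}(a^* ),\,({}^*\nu_B)(b^* )\big)\in{}^{**}R\iff b^*\in{}^*S.$$
   Context: A nonstandard analysis is a functor ${}^*:\mathbf{Set}\to\mathbf{Set}$ (images ${}^*A$, ${}^*f$) which (i) maps the full subcategory of finite sets into itself as a self-equivalence and (ii) preserves finite products and equalizers; so ${}^*(A\times B)={}^*A\times{}^*B$ and for $R\subseteq A\times B$ (resp. $S\subseteq B$), ${}^*R\subseteq{}^*A\times{}^*B$ (resp. ${}^*S\subseteq{}^*B$). For every $a$, ${}^*\{a\}$ is a singleton whose element, viewed in ${}^*A$ via the inclusion $\{a\}\subseteq A$, is $\nu_A(a)$; this gives injections $\nu_A:A\to{}^*A$. Applying the functor twice: ${}^{**}A={}^*({}^*A)$, ${}^{**}R={}^*({}^*R)\subseteq{}^{**}A\times{}^{**}B$, the map ${}^*\nu_B:{}^*B\to{}^{**}B$, and $\nu_{{}^*A}:{}^*A\to{}^{**}A$. *)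

(* Defs.v *)
(* Sets are modelled by Rocq types, functions by Rocq functions,
   subsets by predicates. *)
From Stdlib Require Import List ClassicalEpsilon.

Definition finite (T : Type) : Prop := exists l : list T, forall x : T, In x l.
Definition injective {A B : Type} (f : A -> B) : Prop := forall x y, f x = f y -> x = y.
Definition surjective {A B : Type} (f : A -> B) : Prop := forall y, exists x, f x = y.
Definition bijective {A B : Type} (f : A -> B) : Prop := injective f /\ surjective f.

(* A nonstandard analysis: an endofunctor of Set which
   (i) restricts to a self-equivalence of the full subcategory of finite sets,
   (ii) preserves finite products (terminal object and binary products)
        and equalizers. *)
Record NSA := {
  F : Type -> Type;
  fmap : forall (A B : Type), (A -> B) -> F A -> F B;
  fmap_id : forall (A : Type) (x : F A), fmap A A (fun a => a) x = x;
  fmap_comp : forall (A B C : Type) (f : A -> B) (g : B -> C) (x : F A),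
      fmap A C (fun a => g (f a)) x = fmap B C g (fmap A B f x);
  fin_closed : forall T : Type, finite T -> finite (F T);
  fin_faithful : forall (T U : Type), finite T -> finite U ->
      forall f g : T -> U, (forall x, fmap T U f x = fmap T U g x) -> forall t, f t = g t;
  fin_full : forall (T U : Type), finite T -> finite U ->
      forall h : F T -> F U, exists f : T -> U, forall x, fmap T U f x = h x;
  fin_esssurj : forall U : Type, finite U ->
      exists T : Type, finite T /\ exists h : F T -> U, bijective h;
  pres_terminal : exists x : F unit, forall y : F unit, y = x;
  pres_prod : forall (A B : Type),
      bijective (fun z : F (A * B) => (fmap (A * B) A fst z, fmap (A * B) B snd z));
  pres_eq_inj : forall (A B : Type) (f g : A -> B),
      injective (fmap {x : A | f x = g x} A (@proj1_sig A (fun x => f x = g x)));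
  pres_eq_img : forall (A B : Type) (f g : A -> B) (y : F A),
      fmap A B f y = fmap A B g y <->
      exists z : F {x : A | f x = g x}, fmap _ A (@proj1_sig A (fun x => f x = g x)) z = y
}.

Arguments F N T : rename.
Arguments fmap N {A B} f x : rename.

Definition starSub (N : NSA) {A : Type} (S : A -> Prop) : F N A -> Prop :=
  fun y => exists z : F N {x : A | S x}, fmap N (@proj1_sig A S) z = y.

(* For R ⊆ A × B, *R ⊆ *A × *B, via the identification *(A×B) = *A × *B. *)
Definition starRel (N : NSA) {A B : Type} (R : A * B -> Prop) : F N A * F N B -> Prop :=
  fun uv => exists z : F N {p : A * B | R p},
    fmap N (fun p : {p : A * B | R p} => fst (proj1_sig p)) z = fst uv /\
    fmap N (fun p : {p : A * B | R p} => snd (proj1_sig p)) z = snd uv.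

Definition star_pt (N : NSA) : F N unit :=
  proj1_sig (constructive_indefinite_description _ (pres_terminal N)).

(* nu_A(a): the element of *{a} ≅ *1, viewed in *A. *)
Definition nu (N : NSA) (A : Type) (a : A) : F N A :=
  fmap N (fun _ : unit => a) (star_pt N).

(* Main.v *)
Require Import Defs.
From Stdlib Require Import ClassicalEpsilon.

Section S.
Variable N : NSA.

Lemma starSub_ext {X : Type} (P Q : X -> Prop) (y : F N X) :
  (forall x, P x <-> Q x) -> starSub N P y <-> starSub N Q y.
Proof.
  intros H.
  assert (Hd : forall (P Q : X -> Prop), (forall x, P x -> Q x) -> starSub N P y -> starSub N Q y).
  { clear. intros P Q H [z Hz].
    exists (fmap N (fun p : {x | P x} => exist Q (proj1_sig p) (H _ (proj2_sig p))) z).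
    rewrite <- fmap_comp. simpl. exact Hz. }
  split; apply Hd; intro x; apply H.
Qed.

Lemma starSub_pre {X Y : Type} (g : X -> Y) (T : Y -> Prop) (x : F N X) :
  starSub N (fun x => T (g x)) x <-> starSub N T (fmap N g x).
Proof.
  split.
  - intros [z Hz].
    exists (fmap N (fun p : {x | T (g x)} => exist T (g (proj1_sig p)) (proj2_sig p)) z).
    rewrite <- fmap_comp. simpl. rewrite <- Hz.
    rewrite <- fmap_comp. reflexivity.
  - intros [z Hz].
    destruct (proj2 (pres_prod N X {y | T y}) (x, z)) as [w Hw].
    injection Hw as Hw1 Hw2.
    pose (f1 := fun p : X * {y | T y} => g (fst p)).
    pose (f2 := fun p : X * {y | T y} => proj1_sig (snd p)).
    assert (He : fmap N f1 w = fmap N f2 w).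
    { unfold f1, f2.
      change (fmap N (fun p => g (fst p)) w = fmap N (fun p => proj1_sig (snd p)) w).
      transitivity (fmap N g (fmap N fst w)). { exact (fmap_comp N _ _ _ fst g w). } transitivity (fmap N (fun y => proj1_sig y) (fmap N snd w)). 2:{ symmetry; exact (fmap_comp N _ _ _ snd (fun y => proj1_sig y) w). } rewrite Hw1, Hw2. symmetry; exact Hz. }
    destruct (proj1 (pres_eq_img N _ _ f1 f2 w) He) as [e He'].
    assert (K : forall p : {p : X * {y | T y} | f1 p = f2 p}, T (g (fst (proj1_sig p)))).
    { intros [[a [b Hb]] Hp]. unfold f1, f2 in Hp; simpl in *. rewrite Hp. exact Hb. }
    exists (fmap N (fun p => exist (fun x => T (g x)) (fst (proj1_sig p)) (K p)) e).
    rewrite <- fmap_comp. simpl.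
    change (fmap N (fun a => fst (proj1_sig a)) e = x).
    rewrite (fmap_comp N _ _ _ (@proj1_sig _ (fun p => f1 p = f2 p)) fst). rewrite He'. exact Hw1.
Qed.

Definition iota {A B : Type} (uv : F N A * F N B) : F N (A * B) :=
  proj1_sig (constructive_indefinite_description _ (proj2 (pres_prod N A B) uv)).

Lemma iota_spec {A B : Type} (uv : F N A * F N B) :
  fmap N fst (iota uv) = fst uv /\ fmap N snd (iota uv) = snd uv.
Proof.
  unfold iota. destruct (constructive_indefinite_description _ _) as [w Hw]. simpl.
  subst uv. split; reflexivity.
Qed.

Lemma rel_iff {A B : Type} (R : A * B -> Prop) (uv : F N A * F N B) :
  starRel N R uv <-> starSub N R (iota uv).
Proof.
  destruct (iota_spec uv) as [I1 I2].
  split.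
  - intros [z [H1 H2]].
    assert (E : fmap N (@proj1_sig _ R) z = iota uv).
    { apply (proj1 (pres_prod N A B)). simpl.
      rewrite I1, I2, <- H1, <- H2. f_equal; symmetry; [exact (fmap_comp N _ _ _ (@proj1_sig _ R) fst z) | exact (fmap_comp N _ _ _ (@proj1_sig _ R) snd z)]. }
    exists z. exact E.
  - intros [z Hz]. exists z.
    change (fmap N (fun p => fst (proj1_sig p)) z = fst uv /\
            fmap N (fun p => snd (proj1_sig p)) z = snd uv).
    split; [rewrite <- I1 | rewrite <- I2]; rewrite <- Hz; [exact (fmap_comp N _ _ _ (@proj1_sig _ R) fst z) | exact (fmap_comp N _ _ _ (@proj1_sig _ R) snd z)].
Qed.

Lemma fmap_const {X Y : Type} (c : Y) (x : F N X) :
  fmap N (fun _ => c) x = nu N Y c.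
Proof.
  unfold nu.
  change (fmap N (fun a => (fun _ : unit => c) ((fun _ => tt) a)) x = fmap N (fun _ : unit => c) (star_pt N)).
  rewrite (fmap_comp N _ _ _ (fun _ => tt) (fun _ : unit => c)). f_equal.
  unfold star_pt. destruct (constructive_indefinite_description _ _) as [p Hp]. simpl.
  apply Hp.
Qed.

End S.

Theorem mainTheorem15 (N : NSA) (A B : Type) (R : A * B -> Prop)
    (astar : F N A) (bstar : F N B) :
  let S : B -> Prop := fun b => starRel N R (astar, nu N B b) in
  starRel N (starRel N R) (nu N (F N A) astar, fmap N (nu N B) bstar)
  <-> starSub N S bstar.
Proof.
  intros S.
  pose (M := fmap N (fun b => (astar, nu N B b)) bstar).
  assert (HM : iota N (nu N (F N A) astar, fmap N (nu N B) bstar) = M).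
  { apply (proj1 (pres_prod N (F N A) (F N B))).
    destruct (iota_spec N (nu N (F N A) astar, fmap N (nu N B) bstar)) as [I1 I2].
    rewrite I1, I2. simpl. unfold M. rewrite <- !fmap_comp. simpl.
    rewrite fmap_const. reflexivity. }
  rewrite (rel_iff N (starRel N R)), HM.
  rewrite (starSub_ext N _ (fun p => starSub N R (iota N p)) M (rel_iff N R)).
  rewrite (starSub_pre N (iota N) (starSub N R) M).
  rewrite (starSub_ext N S (fun b => starSub N R ((fun b => iota N (astar, nu N B b)) b)) bstar
             (fun b => rel_iff N R (astar, nu N B b))).
  rewrite (starSub_pre N (fun b => iota N (astar, nu N B b)) (starSub N R) bstar).
  unfold M. rewrite <- fmap_comp. reflexivity.
Qed.
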